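(* (1) If two triangles $I_1,I_2$ intersect, then there is a triangle $I$ with $\mathrm{span}(I)=\mathrm{span}(I_1)+\mathrm{span}(I_2)$ containing $I_1\cup I_2$. (2) If $A_1,A_2\subseteq\mathbb{Z}^2$ are such that some point of $A_1$ is a neighbor in $\mathbf{G}$ of some point of $A_2$, and $A_j\subseteq D(I_j,1/3)$ for triangles $I_j$ ($j=1,2$), then there is a triangle $I$ with $\mathrm{span}(I)=\mathrm{span}(I_1)+\mathrm{span}(I_2)$ such that $A_1\cup A_2\subseteq D(I,1/3)$.
   Context: For real numbers $a,b,c$, the triangle $L(a,b,c)$ is $\{(x,y)\in\mathbb{R}^2 : -x\le a,\ -y\le b,\ x+y\le c\}$; its span is $\mathrm{span}(L(a,b,c))=a+b+c$. The deflation of $I=L(a,b,c)$ by $d$ is $D(I,d)=L(a-d,b-d,c-d)$. The graph $\mathbf{G}$ on $\mathbb{Z}^2$ joins each point $p$ to $p\pm(1,0)$, $p\pm(0,1)$, $p+(-1,1)$, $p+(1,-1)$. *)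

(* Defs.v *)
From Stdlib Require Import Reals ZArith.
Open Scope R_scope.

Record tri := Tri { ta : R; tb : R; tc : R }.

Definition inL (I : tri) (p : R * R) : Prop :=
  - fst p <= ta I /\ - snd p <= tb I /\ fst p + snd p <= tc I.

Definition span (I : tri) : R := ta I + tb I + tc I.

Definition deflate (I : tri) (d : R) : tri :=
  Tri (ta I - d) (tb I - d) (tc I - d).

Definition toR2 (p : Z * Z) : R * R := (IZR (fst p), IZR (snd p)).

Definition Gadj (p q : Z * Z) : Prop :=
  let dx := (fst q - fst p)%Z in let dy := (snd q - snd p)%Z in
  (dx = 1 /\ dy = 0)%Z \/ (dx = -1 /\ dy = 0)%Z \/
  (dx = 0 /\ dy = 1)%Z \/ (dx = 0 /\ dy = -1)%Z \/
  (dx = -1 /\ dy = 1)%Z \/ (dx = 1 /\ dy = -1)%Z.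

(* Main.v *)
Require Import Defs.
From Stdlib Require Import Reals ZArith Lra Lia.
Open Scope R_scope.

Lemma rmax_facts (u v : R) :
  u <= Rmax u v /\ v <= Rmax u v /\ (Rmax u v = u \/ Rmax u v = v).
Proof. unfold Rmax; destruct (Rle_dec u v); lra. Qed.

Theorem lemma2p2 :
  (forall I1 I2 : tri,
     (exists p, inL I1 p /\ inL I2 p) ->
     exists I : tri, span I = span I1 + span I2 /\
       (forall p, inL I1 p \/ inL I2 p -> inL I p)) /\
  (forall (A1 A2 : Z * Z -> Prop) (I1 I2 : tri),
     (exists p q, A1 p /\ A2 q /\ Gadj p q) ->
     (forall p, A1 p -> inL (deflate I1 (1/3)) (toR2 p)) ->
     (forall p, A2 p -> inL (deflate I2 (1/3)) (toR2 p)) ->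
     exists I : tri, span I = span I1 + span I2 /\
       (forall p, A1 p \/ A2 p -> inL (deflate I (1/3)) (toR2 p))).
Proof.
  split.
  - intros [a1 b1 c1] [a2 b2 c2] [[x y] [H1 H2]].
    unfold inL in *; simpl in *.
    exists (Tri (a1+a2+x) (b1+b2+y) (c1+c2-x-y)).
    unfold span; simpl; split; [lra|].
    intros [x' y'] [[? [? ?]]|[? [? ?]]]; simpl in *; lra.
  - intros A1 A2 [a1 b1 c1] [a2 b2 c2] [[p1 p2] [[q1 q2] [Ap [Aq G]]]] H1 H2.
    pose proof (H1 _ Ap) as Hp. pose proof (H2 _ Aq) as Hq.
    unfold inL, deflate, toR2 in *; simpl in *.
    destruct (rmax_facts (-a1) (-a2)) as [s1 [s2 s3]].
    destruct (rmax_facts (-b1) (-b2)) as [t1 [t2 t3]].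
    set (s := Rmax (-a1) (-a2)) in *.
    set (t := Rmax (-b1) (-b2)) in *.
    assert (Hst : s + t <= c1 /\ s + t <= c2).
    { unfold Gadj in G; simpl in G.
      destruct G as [[E F]|[[E F]|[[E F]|[[E F]|[[E F]|[E F]]]]]];
      (assert (Q1 : q1 = (p1 + (q1 - p1))%Z) by lia;
       assert (Q2 : q2 = (p2 + (q2 - p2))%Z) by lia;
       rewrite E in Q1; rewrite F in Q2;
       rewrite Q1, Q2 in Hq; rewrite !plus_IZR in Hq; simpl in Hq;
       destruct s3 as [s3|s3]; destruct t3 as [t3|t3]; lra). }
    exists (Tri (a1+a2+s) (b1+b2+t) (c1+c2-s-t)).
    unfold span; simpl; split; [lra|].
    intros [x y] [A|A]; [pose proof (H1 _ A) as K|pose proof (H2 _ A) as K];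
      unfold inL, deflate, toR2 in *; simpl in *; lra.
Qed.
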